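(* Let $\mathcal{X}\subseteq\mathbb{R}^n$ be a compact set that is comonotone under a permutation mapping $\Psi:\Pi_n\to\Pi_n$. If $\Psi$ is surjective, then $\mathcal{X}$ is standard comonotone.
   Context: $\Pi_n$ is the set of permutations of $[n]$. For $\pi\in\Pi_n$, $\mathcal{Z}(\pi)=\{x\in\mathbb{R}^n: x_{\pi(1)}\ge\cdots\ge x_{\pi(n)}\}$. $\mathcal{X}$ is comonotone under $\Psi$ if for every $\pi\in\Pi_n$ and every $v\in\mathcal{Z}(\pi)$, whenever $\max_{x\in\mathcal{X}}v^\top x$ attains its optimum, it has an optimal solution $x^*\in\mathcal{Z}(\Psi(\pi))$. $\mathcal{X}$ is standard comonotone if it is comonotone under the identity mapping $\Psi(\pi)=\pi$. *)

(* Defs.v *)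
(* R^n is 'rV[R]_n for R : realType;
   coordinates indexed by 'I_n (0-based). Pi_n is {perm 'I_n}. *)
From mathcomp Require Import all_boot all_order all_algebra all_fingroup.
From mathcomp Require Import all_classical all_reals all_analysis.
Set Implicit Arguments. Unset Strict Implicit. Unset Printing Implicit Defensive.
Import Order.TTheory GRing.Theory Num.Theory.
Local Open Scope ring_scope.
Local Open Scope classical_set_scope.

Definition dotv (R : realType) (n : nat) (v x : 'rV[R]_n) : R :=
  \sum_(i < n) v ord0 i * x ord0 i.

Definition Zcone (R : realType) (n : nat) (pi : {perm 'I_n}) : set 'rV[R]_n :=
  [set x | forall i j : 'I_n, (i <= j)%N -> x ord0 (pi j) <= x ord0 (pi i)].

Definition is_maximizer (R : realType) (n : nat) (X : set 'rV[R]_n)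
  (v x : 'rV[R]_n) : Prop :=
  X x /\ forall y, X y -> dotv v y <= dotv v x.

Definition comonotone_under (R : realType) (n : nat) (X : set 'rV[R]_n)
  (Psi : {perm 'I_n} -> {perm 'I_n}) : Prop :=
  forall (pi : {perm 'I_n}) (v : 'rV[R]_n), Zcone pi v ->
    (exists x, is_maximizer X v x) ->
    exists xs, is_maximizer X v xs /\ Zcone (Psi pi) xs.

Definition standard_comonotone (R : realType) (n : nat) (X : set 'rV[R]_n) : Prop :=
  comonotone_under X (fun pi => pi).

(* Main.v *)
Require Import Defs.
From mathcomp Require Import all_boot all_order all_algebra all_fingroup.
From mathcomp Require Import all_classical all_reals all_analysis.
Import numFieldNormedType.Exports.
Set Implicit Arguments. Unset Strict Implicit. Unset Printing Implicit Defensive.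
Import Order.TTheory GRing.Theory Num.Theory.
Local Open Scope ring_scope.
Local Open Scope classical_set_scope.
Lemma dotv_cont (R : realType) (n : nat) (w : 'rV[R]_n) :
  continuous (fun x : 'rV[R]_n => dotv w x).
Proof.
rewrite /dotv.
suff H : forall s : seq 'I_n,
  continuous (fun x : 'rV[R]_n => \sum_(i <- s) w ord0 i * x ord0 i).
  exact: H.
elim=> [|i s IH] x.
  under eq_fun do rewrite big_nil.
  exact: cst_continuous.
under eq_fun do rewrite big_cons.
have H1 : {for x, continuous (fun y : 'rV[R]_n => w ord0 i * y ord0 i)}.
  exact: (continuousM (s := fun _ => w ord0 i) (t := fun y : 'rV[R]_n => y ord0 i) (@cst_continuous _ _ (w ord0 i) x) (@coord_continuous R 1 n ord0 i x)).
exact: (continuousD H1 (IH x)).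
Qed.

Lemma max_exists (R : realType) (n : nat) (X : set 'rV[R]_n) (w : 'rV[R]_n) :
  compact X -> X !=set0 -> exists x, is_maximizer X w x.
Proof.
move=> cX X0.
have [c cX' H] := compact_EVT_max X0 cX (@continuous_subspaceT _ _ X _ (@dotv_cont R n w)).
exists c; split; first by rewrite inE in cX'.
by move=> y Xy; apply: H; rewrite inE.
Qed.
Local Close Scope classical_set_scope.
Lemma abel (R : realType) (N : nat) (a y z : nat -> R) :
  (forall i j, (i <= j)%N -> (j < N)%N -> a j <= a i) ->
  (forall m, (m <= N)%N -> \sum_(k < m) z k <= \sum_(k < m) y k) ->
  \sum_(k < N) z k = \sum_(k < N) y k ->
  \sum_(k < N) a k * z k <= \sum_(k < N) a k * y k.
Proof.
move=> ha hp htot.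
pose D m := \sum_(k < m) (y k - z k).
have DE m : D m = \sum_(k < m) y k - \sum_(k < m) z k by rewrite /D sumrB.
have D0 m : (m <= N)%N -> 0 <= D m by move=> /hp; rewrite DE subr_ge0.
have claim : forall m, (m < N)%N ->
  a m * D m.+1 <= \sum_(k < m.+1) a k * (y k - z k).
  elim=> [|m IH] hm.
    by rewrite /D !big_ord_recr !big_ord0 /= !add0r.
  rewrite /D big_ord_recr [X in _ <= X]big_ord_recr /= -/(D m.+1) mulrDr.
  rewrite lerD2r.

  apply: (le_trans _ (IH (ltnW hm))).
  apply: ler_wpM2r.
  exact: D0 (ltnW hm).
  exact: ha (leqnSn m) hm.
have -> : \sum_(k < N) a k * y k = \sum_(k < N) a k * z k + \sum_(k < N) a k * (y k - z k).
  by rewrite -big_split /=; apply: eq_bigr => k _; rewrite mulrBr addrC subrK.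
rewrite lerDl.
case: N ha hp htot D0 claim => [|N] ha hp htot D0 claim; first by rewrite big_ord0.
apply: (le_trans _ (claim N (ltnSn N))).
by rewrite DE htot subrr mulr0.
Qed.

Lemma sum_le_card (R : realType) (T : finType) (y : T -> R) (P Q : {set T}) (t : R) :
  #|P| = #|Q| -> (forall p, p \in P -> y p <= t) -> (forall q, q \in Q -> t <= y q) ->
  \sum_(p in P) y p <= \sum_(q in Q) y q.
Proof.
move=> hc hP hQ.
apply: (le_trans (y := \sum_(p in P) t)); first exact: ler_sum.
rewrite sumr_const hc -sumr_const; exact: ler_sum.
Qed.

Lemma topm (R : realType) (N m : nat) (y : 'I_N.+1 -> R)
  (hy : forall i j : 'I_N.+1, (i <= j)%N -> y j <= y i)
  (A : {set 'I_N.+1}) : (m <= N.+1)%N ->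
  #|A| = #|[set k : 'I_N.+1 | (k < m)%N]| ->
  \sum_(k in A) y k <= \sum_(k in [set k : 'I_N.+1 | (k < m)%N]) y k.
Proof.
set B := [set k : 'I_N.+1 | (k < m)%N].
move=> hm hA.
rewrite (big_setID B) [X in _ <= X](big_setID A) /= finset.setIC lerD2l.
have hc : #|A :\: B| = #|B :\: A| by rewrite !cardsD hA finset.setIC.
case: m hm @B hA hc => [|m] hm B hA hc.
  apply: (@sum_le_card _ _ y _ _ 0 hc) => p; last by rewrite !inE ltn0 andbF.
  move=> hp; have h0 : #|B :\: A| = 0%N.
    by apply: eq_card0 => k; rewrite !inE ltn0 andbF.
  by move: h0; rewrite -hc => /card0_eq /(_ p); rewrite hp.
apply: (@sum_le_card _ _ y _ _ (y (inord m)) hc).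
- move=> p; rewrite !inE -leqNgt => /andP[hp _].
  apply: hy; rewrite inordK //.
  exact: ltnW.
- move=> q; rewrite !inE => /andP[_ hq]; apply: hy.
  by rewrite inordK.
Qed.

Lemma rearr (R : realType) (n : nat) (a y : 'I_n -> R) (tau : {perm 'I_n}) :
  (forall i j : 'I_n, (i <= j)%N -> a j <= a i) ->
  (forall i j : 'I_n, (i <= j)%N -> y j <= y i) ->
  \sum_k a k * y (tau k) <= \sum_k a k * y k.
Proof.
case: n a y tau => [|N] a y tau ha hy; first by rewrite !big_ord0.
pose A k := a (inord k); pose Y k := y (inord k); pose Z k := y (tau (inord k)).
have e1 : \sum_k a k * y (tau k) = \sum_(k < N.+1) A k * Z k.
  by apply: eq_bigr => k _; rewrite /A /Z inord_val.
have e2 : \sum_k a k * y k = \sum_(k < N.+1) A k * Y k.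
  by apply: eq_bigr => k _; rewrite /A /Y inord_val.
have eZ : forall m, \sum_(k < N.+1 | (k < m)%N) Z k = \sum_(k in [set k : 'I_N.+1 | (k < m)%N]) y (tau k).
  by move=> m; apply: eq_big => [k|k _]; rewrite ?inE // /Z inord_val.
have eY : forall m, \sum_(k < N.+1 | (k < m)%N) Y k = \sum_(k in [set k : 'I_N.+1 | (k < m)%N]) y k.
  by move=> m; apply: eq_big => [k|k _]; rewrite ?inE // /Y inord_val.
rewrite e1 e2; apply: abel.
- move=> i j hij hj; rewrite /A; apply: ha; rewrite !inordK //.
  exact: leq_ltn_trans hij hj.
- move=> m hm.
  rewrite (big_ord_widen N.+1 Z hm) (big_ord_widen N.+1 Y hm) eZ eY.
  rewrite -(big_imset _ (in2W (@perm_inj _ tau))) /=.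
  apply: topm => //.
  by rewrite card_imset //; exact: perm_inj.
- have h1 := big_ord_widen N.+1 Z (leqnn N.+1).
  have h2 := big_ord_widen N.+1 Y (leqnn N.+1).
  rewrite -(big_mkord xpredT Z) -(big_mkord xpredT Y).
  rewrite !big_mkord.
  rewrite (eq_bigr (fun k => y (tau k))); last by move=> k _; rewrite /Z inord_val.
  rewrite [RHS](eq_bigr (fun k => y k)); last by move=> k _; rewrite /Y inord_val.
  by rewrite [RHS](reindex_inj (@perm_inj _ tau)).
Qed.

Theorem theorem1 (R : realType) (n : nat) (X : set 'rV[R]_n)
  (Psi : {perm 'I_n} -> {perm 'I_n}) :
  compact X -> comonotone_under X Psi ->
  (forall sigma : {perm 'I_n}, exists pi, Psi pi = sigma) ->
  standard_comonotone X.
Proof.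
move=> cX hcom hsurj pi v hv [x0 hx0].
have X0 : exists x, X x by exists x0; exact: hx0.1.
pose a : 'I_n -> R := fun k => v ord0 (pi k).
have ha : forall i j : 'I_n, (i <= j)%N -> a j <= a i by move=> i j hij; exact: hv.
pose w (r : {perm 'I_n}) : 'rV[R]_n := \row_(i < n) a ((r^-1)%g i).
have wZ : forall r, Zcone r (w r).
  by move=> r i j hij; rewrite !mxE !permK; exact: ha.
have wpi : w pi = v by apply/rowP => i; rewrite mxE /a permKV.
have dot_eq : forall r x, dotv (w r) x = \sum_k a k * x ord0 (r k).
  move=> r x; rewrite /dotv (reindex_inj (@perm_inj _ r)).
  by apply: eq_bigr => k _; rewrite mxE permK.
have rear : forall r r' x, Zcone r' x -> dotv (w r) x <= dotv (w r') x.
  move=> r r' x hx; rewrite !dot_eq.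
  have := @rearr R n a (fun k => x ord0 (r' k)) (r * r'^-1)%g ha hx.
  by under eq_bigr do rewrite permM permKV.
have /choice [xf hxf] : forall r, exists xs, is_maximizer X (w r) xs /\ Zcone (Psi r) xs.
  move=> r; apply: hcom; first exact: wZ.
  exact: max_exists.
have /choice [phi hphi] := hsurj.
have phi_inj : injective phi.
  by move=> s s' e; rewrite -(hphi s) -(hphi s') e.
pose M r := dotv (w r) (xf r).
have ineq1 : forall r, M r <= dotv (w (Psi r)) (xf r).
  by move=> r; apply: rear; exact: (hxf r).2.
have ineq2 : forall r, dotv (w (Psi r)) (xf r) <= M (Psi r).
  by move=> r; apply: (hxf (Psi r)).1.2; exact: (hxf r).1.1.
have hsum : \sum_r (M (Psi r) - M r) = 0.
  rewrite sumrB (reindex_inj phi_inj) /=.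
  under eq_bigr do rewrite hphi.
  by rewrite subrr.
have hge : forall r : {perm 'I_n}, true -> 0 <= M (Psi r) - M r.
  by move=> r _; rewrite subr_ge0; exact: le_trans (ineq1 r) (ineq2 r).
have heq := psumr_eq0P hge hsum.
have [r hr] := hsurj pi.
exists (xf r); split; last by rewrite -hr; exact: (hxf r).2.
split; first exact: (hxf r).1.1.
move=> y Xy.
have e : M (Psi r) = M r by apply/eqP; rewrite -subr_eq0 heq.
have e2 : dotv (w (Psi r)) (xf r) = M (Psi r).
  by apply: le_anti; rewrite ineq2 /= e ineq1.
rewrite -wpi -hr e2.
exact: (hxf (Psi r)).1.2.
Qed.
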